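(* Let $R$ be a ring and $M$ a subinjective extension-reflecting right $R$-module. Then $M\in \underline{\mathfrak{In}}^{-1}(S)$ for every simple right $R$-module $S$ if and only if $M\in \underline{\mathfrak{In}}^{-1}(A)$ for every right $R$-module $A$ of finite composition length.
   Context: Modules are unital right $R$-modules. For modules $X,Y$, $X\in \underline{\mathfrak{In}}^{-1}(Y)$ means: for every module $C$ containing $X$ as a submodule, every homomorphism $X\to Y$ extends to a homomorphism $C\to Y$. A module $M$ is subinjective extension-reflecting if for every short exact sequence $0\to A\to B\to C\to 0$ of right $R$-modules, $M\in \underline{\mathfrak{In}}^{-1}(A)\cap \underline{\mathfrak{In}}^{-1}(C)$ implies $M\in \underline{\mathfrak{In}}^{-1}(B)$. *)

(* Defs.v *)
From HB Require Import structures.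
From mathcomp Require Import all_boot all_order all_algebra.
Set Implicit Arguments. Unset Strict Implicit. Unset Printing Implicit Defensive.
Import GRing.Theory.
Local Open Scope ring_scope.

(* Right R-modules are left modules over the converse ring R^c. *)
Notation rmodType R := (lmodType (R^c)).

Section Defs.
Variable R : pzRingType.

(* X \in In^{-1}(Y): for every module C containing X as a submodule
   (i.e. every injective homomorphism i : X -> C), every homomorphism
   f : X -> Y extends along i to a homomorphism C -> Y. *)
Definition In_inv (X Y : rmodType R) : Prop :=
  forall (C : rmodType R) (i : {linear X -> C}), injective i ->
  forall f : {linear X -> Y},
  exists g : {linear C -> Y}, forall x, g (i x) = f x.

Definition short_exact (A B C : rmodType R)
  (f : {linear A -> B}) (g : {linear B -> C}) : Prop :=
  injective f /\ (forall c, exists b, g b = c) /\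
  (forall b, g b = 0 <-> exists a, f a = b).

Definition subinj_ext_reflecting (M : rmodType R) : Prop :=
  forall (A B C : rmodType R) (f : {linear A -> B}) (g : {linear B -> C}),
  short_exact f g -> In_inv M A -> In_inv M C -> In_inv M B.

Definition is_submod (A : rmodType R) (S : A -> Prop) : Prop :=
  S 0 /\ forall (a : R^c) (x y : A), S x -> S y -> S (a *: x + y).

Definition simple_mod (S : rmodType R) : Prop :=
  (exists x : S, x != 0) /\
  forall T : S -> Prop, is_submod T ->
    (forall x, T x -> x = 0) \/ (forall x, T x).

(* A has finite composition length: there is a composition series
   0 = S_0 < S_1 < ... < S_n = A with each factor S_{i+1}/S_i simple,
   i.e. S_i is a proper submodule of S_{i+1} and no submodule lies
   strictly between them. *)
Definition finite_length (A : rmodType R) : Prop :=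
  exists (n : nat) (S : nat -> A -> Prop),
    (forall i, is_submod (S i)) /\
    (forall x, S 0%N x <-> x = 0) /\
    (forall x, S n x) /\
    (forall i, (i < n)%N ->
       (forall x, S i x -> S i.+1 x) /\
       (exists x, S i.+1 x /\ ~ S i x) /\
       (forall T : A -> Prop, is_submod T ->
          (forall x, S i x -> T x) -> (forall x, T x -> S i.+1 x) ->
          (forall x, T x -> S i x) \/ (forall x, S i.+1 x -> T x))).
End Defs.

(* Main.v *)
Require Import Defs.
From HB Require Import structures.
From mathcomp Require Import all_boot all_order all_algebra.
From Stdlib Require Import ClassicalEpsilon.
Set Implicit Arguments. Unset Strict Implicit. Unset Printing Implicit Defensive.
Import GRing.Theory.
Local Open Scope ring_scope.

Definition pb (P : Prop) : bool := if excluded_middle_informative P then true else false.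
Lemma pbP P : reflect P (pb P).
Proof. rewrite /pb; case: excluded_middle_informative => h; constructor => //. Qed.

Section SubM.
Variables (R : pzRingType) (A : rmodType R) (N : A -> Prop) (HN : is_submod N).
Definition subp : pred A := fun x => let _ := HN in pb (N x).
Lemma subp_closed : submod_closed subp.
Proof.
case: HN => H0 HL; split; first by apply/pbP.
by move=> a u v /pbP hu /pbP hv; apply/pbP; apply: HL.
Qed.
HB.instance Definition _ := GRing.isSubmodClosed.Build (R^c) A subp (GRing.submod_closed_semi subp_closed).
Record subT := SubT { subval : A; sprop : subp subval }.
HB.instance Definition _ := [isSub for subval].
HB.instance Definition _ := [Choice of subT by <:].
HB.instance Definition _ := [SubChoice_isSubLmodule of subT by <:].
Lemma sval_lin : linear subval. Proof. by []. Qed.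
HB.instance Definition _ := GRing.isLinear.Build (R^c) subT A _ subval sval_lin.
End SubM.
From Stdlib Require Import FunctionalExtensionality PropExtensionality.

Section SubLemmas.
Variables (R : pzRingType) (B : rmodType R) (N : B -> Prop) (HN : is_submod N).
Lemma N0 : N 0. Proof. by case: HN. Qed.
Lemma ND x y : N x -> N y -> N (x + y).
Proof. by move=> hx hy; have := proj2 HN 1 x y hx hy; rewrite scale1r. Qed.
Lemma NN x : N x -> N (- x).
Proof. move=> hx; have := proj2 HN (-1) x 0 hx N0; by rewrite addr0 scaleN1r. Qed.
Lemma NB x y : N x -> N y -> N (x - y).
Proof. by move=> hx hy; apply: ND => //; apply: NN. Qed.
Lemma NZ (a : R^c) x : N x -> N (a *: x).
Proof. by move=> hx; have := proj2 HN a x 0 hx N0; rewrite addr0. Qed.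
End SubLemmas.

Section Quot.
Variables (R : pzRingType) (B : rmodType R) (N : B -> Prop) (HN : is_submod N).
Definition canon (b : B) : B := epsilon (inhabits 0) (fun c => N (c - b)).
Lemma canon_spec b : N (canon b - b).
Proof. apply: (epsilon_spec (inhabits 0) (fun c => N (c - b))); exists b; rewrite subrr; exact: N0. Qed.
Lemma canon_eq b b' : N (b - b') -> canon b = canon b'.
Proof.
move=> h; rewrite /canon; congr epsilon; apply: functional_extensionality => c.
apply: propositional_extensionality; split => hc.
  have -> : c - b' = (c - b) + (b - b') by rewrite addrA subrK.
  exact: ND.
have -> : c - b = (c - b') - (b - b') by rewrite opprB addrA subrK.
exact: NB.
Qed.
Lemma canonE x y : canon x = canon y -> N (x - y).
Proof.
move=> e; have h1 := canon_spec x; have h2 := canon_spec y.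
have -> : x - y = (canon y - y) - (canon x - x) by rewrite e opprB [RHS]addrC addrA subrK.
exact: NB.
Qed.
Lemma canon_idem b : canon (canon b) = canon b.
Proof. apply: canon_eq; exact: canon_spec. Qed.

Definition qpred : pred B := fun b => let _ := HN in canon b == b.
Record quotT := QuotT { qval : B; qprop : qpred qval }.
HB.instance Definition _ := [isSub for qval].
HB.instance Definition _ := [Choice of quotT by <:].
Definition pi (b : B) : quotT := @QuotT (canon b) (introT eqP (canon_idem b)).
Lemma qvalK x : pi (qval x) = x.
Proof. apply: val_inj => /=; exact/eqP/(qprop x). Qed.
Lemma pi_eq x y : pi x = pi y <-> N (x - y).
Proof.
split => [e|h]; first by apply: canonE; exact: (congr1 qval e).
by apply: val_inj => /=; apply: canon_eq.
Qed.
Definition qadd (x y : quotT) := pi (qval x + qval y).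
Definition qopp (x : quotT) := pi (- qval x).
Definition qzero := pi 0.
Definition qscale (a : R^c) (x : quotT) := pi (a *: qval x).
Lemma qaddE x y : qadd (pi x) (pi y) = pi (x + y).
Proof.
apply/pi_eq; have h1 := canon_spec x; have h2 := canon_spec y.
rewrite /=; have -> : canon x + canon y - (x + y) = (canon x - x) + (canon y - y).
  by rewrite opprD addrACA.
exact: ND.
Qed.
Lemma qoppE x : qopp (pi x) = pi (- x).
Proof.
apply/pi_eq; have h1 := canon_spec x; rewrite /= -opprD; exact: NN.
Qed.
Lemma qscaleE a x : qscale a (pi x) = pi (a *: x).
Proof.
apply/pi_eq; have h1 := canon_spec x; rewrite /= -scalerBr; exact: NZ.
Qed.
Lemma qind (P : quotT -> Prop) : (forall b, P (pi b)) -> forall x, P x.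
Proof. by move=> h x; rewrite -(qvalK x). Qed.

Lemma qaddA : associative qadd.
Proof. by elim/qind => x; elim/qind => y; elim/qind => z; rewrite !qaddE addrA. Qed.
Lemma qaddC : commutative qadd.
Proof. by elim/qind => x; elim/qind => y; rewrite !qaddE addrC. Qed.
Lemma qadd0 : left_id qzero qadd.
Proof. by elim/qind => x; rewrite qaddE add0r. Qed.
Lemma qaddN : left_inverse qzero qopp qadd.
Proof. by elim/qind => x; rewrite qoppE qaddE addNr. Qed.
HB.instance Definition _ := GRing.isZmodule.Build quotT qaddA qaddC qadd0 qaddN.
Lemma qscaleA a b v : qscale a (qscale b v) = qscale (a * b) v.
Proof. by elim/qind: v => x; rewrite !qscaleE scalerA. Qed.
Lemma qaddE2 x y : pi x + pi y = pi (x + y). Proof. exact: qaddE. Qed.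
Lemma qscale1 : left_id 1 qscale.
Proof. by elim/qind => x; rewrite qscaleE scale1r. Qed.
Lemma qscaleDr : right_distributive qscale +%R.
Proof. by move=> a; elim/qind => x; elim/qind => y; rewrite qaddE2 !qscaleE qaddE2 scalerDr. Qed.
Lemma qscaleDl v : {morph qscale^~ v: a b / a + b}.
Proof. by elim/qind: v => x a b; rewrite !qscaleE qaddE2 scalerDl. Qed.
HB.instance Definition _ := GRing.Zmodule_isLmodule.Build (R^c) quotT qscaleA qscale1 qscaleDr qscaleDl.
Lemma pi_lin : linear pi.
Proof. move=> a x y. rewrite -qaddE2; congr (_ + _); exact: (esym (qscaleE a x)). Qed.
HB.instance Definition _ := GRing.isLinear.Build (R^c) B quotT _ pi pi_lin.
Lemma pi0 b : pi b = 0 <-> N b.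
Proof. by rewrite -/qzero /qzero pi_eq subr0. Qed.
End Quot.
Section ZMap.
Variables (R : pzRingType) (C Y : rmodType R).
Definition zmap (c : C) : Y := 0.
Lemma zmap_lin : linear zmap.
Proof. by move=> a x y; rewrite /zmap scaler0 addr0. Qed.
HB.instance Definition _ := GRing.isLinear.Build (R^c) C Y _ zmap zmap_lin.
End ZMap.

Lemma In_inv_zero (R : pzRingType) (M Y : rmodType R) : (forall y : Y, y = 0) -> In_inv M Y.
Proof.
move=> hY C i _ f; exists (@zmap R C Y : {linear C -> Y}) => x; by rewrite (hY (f x)).
Qed.
Lemma subpP (R : pzRingType) (A : rmodType R) (N : A -> Prop) (HN : is_submod N) x :
  reflect (N x) (subp HN x).
Proof. exact: pbP. Qed.

Section Incl.
Variables (R : pzRingType) (A : rmodType R) (N1 N2 : A -> Prop)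
  (HN1 : is_submod N1) (HN2 : is_submod N2) (hsub : forall x, N1 x -> N2 x).
Lemma incl_proof (x : subT HN1) : subp HN2 (subval x).
Proof. apply/subpP; apply: hsub; apply/subpP; exact: sprop. Qed.
Definition incl (x : subT HN1) : subT HN2 := SubT (incl_proof x).
Lemma incl_lin : linear incl.
Proof. by move=> a x y; apply: val_inj. Qed.
HB.instance Definition _ := GRing.isLinear.Build (R^c) (subT HN1) (subT HN2) _ incl incl_lin.
Lemma incl_inj : injective incl.
Proof. by move=> x y /(congr1 val) /= e; apply: val_inj. Qed.
End Incl.

Lemma simple_fl (R : pzRingType) (S : rmodType R) : simple_mod S -> finite_length S.
Proof.
case=> [[x0 hx0] hmax].
exists 1%N, (fun i x => if i is 0%N then x = 0 else True); split.
  case=> [|i]; split => //= a x y -> ->; by rewrite scaler0 addr0.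
split => // ; split => // i; rewrite ltnS leqn0 => /eqP -> /=; split => //.
split; first by exists x0; split => //; apply/eqP.
move=> T hT _ _; case: (hmax T hT) => h; [left|right] => x //; exact: h.
Qed.
Section Step.
Variables (R : pzRingType) (M A : rmodType R) (hM : subinj_ext_reflecting M)
  (hsimple : forall S : rmodType R, simple_mod S -> In_inv M S)
  (N1 N2 : A -> Prop) (HN1 : is_submod N1) (HN2 : is_submod N2)
  (hsub : forall x, N1 x -> N2 x) (hex : exists x, N2 x /\ ~ N1 x)
  (hmax : forall T : A -> Prop, is_submod T -> (forall x, N1 x -> T x) -> (forall x, T x -> N2 x) ->
     (forall x, T x -> N1 x) \/ (forall x, N2 x -> T x)).
Definition N' := fun y : subT HN2 => N1 (subval y).
Lemma HN' : is_submod N'.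
Proof.
split.
  rewrite /N' raddf0; exact: N0.
move=> a x y; rewrite /N' linearP; exact: (proj2 HN1).
Qed.
Lemma step : In_inv M (subT HN1) -> In_inv M (subT HN2).
Proof.
move=> hIn1.
apply: (hM (f := (incl HN2 hsub : {linear _ -> _})) (g := (pi HN' : {linear _ -> _}))) => //.
  split; first exact: incl_inj.
  split; first by move=> c; exists (qval c); exact: qvalK.
  move=> b; split.
    move=> /= /pi0 hb; exists (SubT (introT (subpP HN1 _) hb)); exact: val_inj.
  case=> a <-; apply/pi0; rewrite /N' /=; apply/subpP; exact: (sprop a).
apply: hsimple; split.
  case: hex => x [h2 h1]; exists (pi HN' (SubT (introT (subpP HN2 x) h2))).
  by apply/eqP => /pi0; rewrite /N' /=.
move=> T hT.
pose T' := fun x => exists h : subp HN2 x, T (pi HN' (SubT h)).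
have hT' : is_submod T'.
  split.
    exists (introT (subpP HN2 0) (N0 HN2)).
    have -> : SubT (introT (subpP HN2 0) (N0 HN2)) = 0 by exact: val_inj.
    rewrite raddf0; exact: (proj1 hT).
  move=> a x y [hx Tx] [hy Ty].
  have hxy : subp HN2 (a *: x + y).
    apply/subpP; apply: (proj2 HN2); exact/subpP.
  exists hxy.
  have -> : SubT hxy = a *: SubT hx + SubT hy by exact: val_inj.
  rewrite linearP; exact: (proj2 hT).
have h1 : forall x, N1 x -> T' x.
  move=> x hx; exists (introT (subpP HN2 x) (hsub hx)).
  have -> : pi HN' (SubT (introT (subpP HN2 x) (hsub hx))) = 0.
    by apply/pi0; rewrite /N' /=.
  exact: (proj1 hT).
have h2 : forall x, T' x -> N2 x by move=> x [h _]; exact/subpP.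
case: (hmax hT' h1 h2) => h; [left|right].
  elim/qind => -[x hx] Tx; apply/pi0; rewrite /N' /=; apply: h; exists hx; exact: Tx.
elim/qind => -[x hx]; have [hx' Tx] := h x (elimT (subpP HN2 x) hx).
by rewrite (bool_irrelevance hx hx').
Qed.

End Step.
Theorem mainTheorem4 (R : pzRingType) (M : rmodType R) :
  subinj_ext_reflecting M ->
  ((forall S : rmodType R, simple_mod S -> In_inv M S) <->
   (forall A : rmodType R, finite_length A -> In_inv M A)).
Proof.
move=> hM; split; last first.
  move=> hf S hS; apply: hf; exact: simple_fl.
move=> hs A [n [S [HS [H0 [Hn Hi]]]]].
have key : forall i, (i <= n)%N -> In_inv M (subT (HS i)).
  elim=> [_|i IH hi].
    apply: In_inv_zero => y; apply: val_inj; rewrite raddf0 /=.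
    exact: ((H0 (subval y)).1 (elimT (subpP _ _) (sprop y))).
  have [hs1 [hex hmx]] := Hi i hi.
  apply: (step hM hs hs1 hex hmx); exact: IH (ltnW hi).
have kn := key n (leqnn n).
apply: (hM _ _ _ (subval (HN := HS n) : {linear _ -> _}) (pi (HS n) : {linear _ -> _})) => //.
  split; first exact: val_inj.
  split; first by move=> c; exists (qval c); exact: qvalK.
  move=> b; split.
    move=> /= /pi0 hb; by exists (SubT (introT (subpP (HS n) _) hb)).
  by case=> a <-; apply/pi0.
apply: In_inv_zero; elim/qind => b; apply/pi0; exact: Hn.
Qed.
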